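(* Let $n\ge3$, $1<k<n/2$, $p>\frac{nk}{n-2k}$, and let $u$ be a regular solution of (1.6). If $u(r)r^{\frac{2k}{p-k}}\to0$ as $r\to\infty$, then $u(r)=O(r^{\frac{2k-n}{k}})$ as $r\to\infty$.
   Context: Problem (1.6) is: given $\rho>0$, find $u$ with $-\tfrac{1}{k}C_{n-1}^{k-1}(r^{n-k}|u'|^{k-1}u')'=r^{n-1}u^{p}$, $u(r)>0$ for all $r>0$, $u'(0)=0$, $u(0)=\rho$, where $C_{n-1}^{k-1}$ is the binomial coefficient. A solution $u$ of (1.6) is regular if $x\mapsto u(|x|)$ belongs to $C^2(\mathbb{R}^n)$. *)

(* Defs.v *)
From Stdlib Require Import Reals Lra Lia.
Open Scope R_scope.

(* Points of R^n are represented as functions nat -> R; only the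
   coordinates 0..n-1 matter. *)
Fixpoint sumsq (n : nat) (x : nat -> R) : R :=
  match n with
  | O => 0
  | S m => sumsq m x + x m ^ 2
  end.

Definition nnorm (n : nat) (x : nat -> R) : R := sqrt (sumsq n x).

Definition shift (x : nat -> R) (i : nat) (t : R) : nat -> R :=
  fun j => if Nat.eqb j i then x j + t else x j.

Definition cont_Rn (n : nat) (f : (nat -> R) -> R) : Prop :=
  forall x eps, eps > 0 -> exists d, d > 0 /\
    forall y, nnorm n (fun j => y j - x j) < d -> Rabs (f y - f x) < eps.

Definition C2_Rn (n : nat) (f : (nat -> R) -> R) : Prop :=
  exists (g : nat -> (nat -> R) -> R) (h : nat -> nat -> (nat -> R) -> R),
    cont_Rn n f /\
    (forall i x, (i < n)%nat ->
        derivable_pt_lim (fun t => f (shift x i t)) 0 (g i x)) /\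
    (forall i, (i < n)%nat -> cont_Rn n (g i)) /\
    (forall i j x, (i < n)%nat -> (j < n)%nat ->
        derivable_pt_lim (fun t => g i (shift x j t)) 0 (h i j x)) /\
    (forall i j, (i < n)%nat -> (j < n)%nat -> cont_Rn n (h i j)).

(* u'(0) = 0, as a (right) derivative at the endpoint r = 0 of [0,oo) *)
Definition right_deriv_zero_at0 (u : R -> R) : Prop :=
  forall eps, eps > 0 -> exists d, d > 0 /\
    forall h, 0 < h < d -> Rabs ((u h - u 0) / h) < eps.

(* u solves problem (1.6) with parameter rho:
   -(1/k) C_{n-1}^{k-1} (r^{n-k} |u'|^{k-1} u')' = r^{n-1} u^p  for r > 0,
   u(r) > 0 for r > 0, u'(0) = 0, u(0) = rho. *)
Definition solves_1_6 (n k : nat) (p rho : R) (u : R -> R) : Prop :=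
  (exists u' : R -> R,
     (forall r, r > 0 -> derivable_pt_lim u r (u' r)) /\
     (forall r, r > 0 -> exists d,
        derivable_pt_lim
          (fun s => s ^ (n - k) * (Rabs (u' s)) ^ (k - 1) * u' s) r d /\
        - (1 / INR k) * C (n - 1) (k - 1) * d = r ^ (n - 1) * Rpower (u r) p)) /\
  (forall r, r > 0 -> u r > 0) /\
  right_deriv_zero_at0 u /\
  u 0 = rho.

Definition regular (n : nat) (u : R -> R) : Prop :=
  C2_Rn n (fun x => u (nnorm n x)).

(* Main.v *)
Require Import Defs.
From Stdlib Require Import Reals Lra Lia Psatz Classical ClassicalEpsilon.
Open Scope R_scope.

Lemma fun_choice_R (P : R -> R -> Prop) :
  (forall x, exists y, P x y) -> exists f : R -> R, forall x, P x (f x).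
Proof.
  intro H. exists (fun x => proj1_sig (constructive_indefinite_description _ (H x))).
  intro x. exact (proj2_sig (constructive_indefinite_description _ (H x))).
Qed.

Lemma nonincr (f f' : R -> R) a :
  (forall x, a < x -> derivable_pt_lim f x (f' x)) ->
  (forall x, a < x -> f' x <= 0) ->
  forall x y, a < x -> x <= y -> f y <= f x.
Proof.
  intros Hd Hs x y Hx Hxy.
  destruct (Req_dec x y) as [->|Hne]; [lra|].
  destruct (MVT_cor2 f f' x y) as [c [Hc1 Hc2]]; [lra| |].
  - intros c Hc. apply Hd. lra.
  - assert (f' c <= 0) by (apply Hs; lra). nra.
Qed.

Lemma nondecr (f f' : R -> R) a :
  (forall x, a < x -> derivable_pt_lim f x (f' x)) ->
  (forall x, a < x -> 0 <= f' x) ->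
  forall x y, a < x -> x <= y -> f x <= f y.
Proof.
  intros Hd Hs x y Hx Hxy.
  destruct (Req_dec x y) as [->|Hne]; [lra|].
  destruct (MVT_cor2 f f' x y) as [c [Hc1 Hc2]]; [lra| |].
  - intros c Hc. apply Hd. lra.
  - assert (0 <= f' c) by (apply Hs; lra). nra.
Qed.

Lemma Rpower_pos x y : 0 < Rpower x y.
Proof. unfold Rpower. apply exp_pos. Qed.

Lemma Rpower_large g M : 0 < g -> exists S, 0 < S /\ forall s, S < s -> M < Rpower s g.
Proof.
  intros Hg. set (M1 := Rmax M 1).
  exists (exp (ln M1 / g)). split; [apply exp_pos|].
  intros s Hs. assert (0 < s) by (pose proof (exp_pos (ln M1 / g)); lra).
  unfold Rpower.
  assert (ln (exp (ln M1 / g)) < ln s) by (apply ln_increasing; [apply exp_pos|lra]).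
  rewrite ln_exp in H0.
  assert (ln M1 < g * ln s).
  { apply Rmult_lt_compat_l with (r:=g) in H0; [|lra].
    replace (g * (ln M1 / g)) with (ln M1) in H0 by (field; lra). lra. }
  assert (HM1 : 0 < M1) by (unfold M1; pose proof (Rmax_r M 1); lra).
  assert (M <= M1) by (unfold M1; apply Rmax_l).
  pose proof (exp_increasing _ _ H1). rewrite (exp_ln M1) in H3 by exact HM1. lra.
Qed.

Lemma Rpower_small g eps : 0 < g -> 0 < eps -> exists S, 0 < S /\ forall s, S < s -> Rpower s (-g) < eps.
Proof.
  intros Hg He. destruct (Rpower_large g (/eps) Hg) as [S [HS H]].
  exists S. split; [lra|]. intros s Hs. rewrite Rpower_Ropp.
  specialize (H s Hs). pose proof (Rpower_pos s g).
  apply Rinv_lt_contravar in H; [|apply Rmult_lt_0_compat; [apply Rinv_0_lt_compat|]; lra].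
  rewrite Rinv_inv in H. exact H.
Qed.

Lemma Rpower_m1 s a : 0 < s -> Rpower s (a - 1) = Rpower s a / s.
Proof.
  intro Hs. unfold Rminus. rewrite Rpower_plus, Rpower_Ropp, Rpower_1 by exact Hs.
  reflexivity.
Qed.

Lemma Rpower_mul_inv s a : Rpower s (-a) * Rpower s a = 1.
Proof. rewrite Rpower_Ropp. pose proof (Rpower_pos s a). field. lra. Qed.

Lemma pow_lt_inv a b m : 0 <= a -> 0 <= b -> (0 < m)%nat -> a ^ m <= b ^ m -> a <= b.
Proof.
  intros Ha Hb Hm H. destruct (Rle_lt_dec a b) as [|Hlt]; [auto|].
  exfalso. assert (b ^ m < a ^ m).
  { destruct m as [|m]; [lia|]. clear Hm H. induction m.
    - simpl. lra.
    - change (b * b ^ S m < a * a ^ S m).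
      assert (0 <= b ^ S m) by (apply pow_le; lra). nra. }
  lra.
Qed.

Lemma binom_up b z m : 0 <= z -> z <= b ->
  b ^ (S m) - z ^ (S m) <= INR (S m) * b ^ m * (b - z).
Proof.
  intros Hz Hzb. induction m.
  - simpl. lra.
  - change (b * b ^ S m - z * z ^ S m <= INR (S (S m)) * (b * b^m) * (b - z)).
    rewrite S_INR.
    assert (z ^ S m <= b ^ S m) by (apply pow_incr; lra).
    assert (0 <= b ^ m) by (apply pow_le; lra).
    assert (b ^ S m = b * b ^ m) by reflexivity.
    assert (b * (b ^ S m - z ^ S m) <= b * (INR (S m) * b ^ m * (b - z))).
    { apply Rmult_le_compat_l; lra. }
    assert (z ^ S m * (b - z) <= b ^ S m * (b - z)).
    { apply Rmult_le_compat_r; lra. }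
    rewrite <- H1. nra.
Qed.

Lemma binom_lo b z m : 0 <= z -> z <= b ->
  INR (S m) * z ^ m * (b - z) <= b ^ (S m) - z ^ (S m).
Proof.
  intros Hz Hzb. induction m.
  - simpl. lra.
  - change (INR (S (S m)) * (z * z^m) * (b - z) <= b * b ^ S m - z * z ^ S m).
    rewrite S_INR.
    assert (0 <= z ^ m) by (apply pow_le; lra).
    assert (0 <= INR (S m)) by apply pos_INR.
    assert (z ^ S m = z * z ^ m) by reflexivity.
    assert (b ^ S m = b * b ^ m) by reflexivity.
    assert (z * (INR (S m) * z ^ m * (b - z)) <= b * (b ^ S m - z ^ S m)).
    { apply Rmult_le_compat; try lra. apply Rmult_le_pos; [apply Rmult_le_pos|]; lra. }
    nra.
Qed.

Lemma D_mult f g a b x : derivable_pt_lim f x a -> derivable_pt_lim g x b ->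
  derivable_pt_lim (fun y => f y * g y) x (a * g x + f x * b).
Proof. intros. exact (derivable_pt_lim_mult f g x a b H H0). Qed.
Lemma D_plus f g a b x : derivable_pt_lim f x a -> derivable_pt_lim g x b ->
  derivable_pt_lim (fun y => f y + g y) x (a + b).
Proof. intros. exact (derivable_pt_lim_plus f g x a b H H0). Qed.
Lemma D_minus f g a b x : derivable_pt_lim f x a -> derivable_pt_lim g x b ->
  derivable_pt_lim (fun y => f y - g y) x (a - b).
Proof. intros. exact (derivable_pt_lim_minus f g x a b H H0). Qed.
Lemma D_opp f a x : derivable_pt_lim f x a ->
  derivable_pt_lim (fun y => - f y) x (- a).
Proof. intros. exact (derivable_pt_lim_opp f x a H). Qed.
Lemma D_scal f a c x : derivable_pt_lim f x a ->
  derivable_pt_lim (fun y => c * f y) x (c * a).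
Proof. intros. exact (derivable_pt_lim_scal f c x a H). Qed.
Lemma D_const c x : derivable_pt_lim (fun _ => c) x 0.
Proof. apply derivable_pt_lim_const. Qed.
Lemma D_id x : derivable_pt_lim (fun y => y) x 1.
Proof. apply derivable_pt_lim_id. Qed.
Lemma D_div f g a b x : derivable_pt_lim f x a -> derivable_pt_lim g x b -> g x <> 0 ->
  derivable_pt_lim (fun y => f y / g y) x ((a * g x - f x * b) / (g x)^2).
Proof. intros. replace ((a * g x - f x * b) / (g x)^2) with ((a * g x - b * f x) / (g x)²)
  by (unfold Rsqr; field; auto). exact (derivable_pt_lim_div f g x a b H H0 H1). Qed.
Lemma D_pow f a m x : derivable_pt_lim f x a ->
  derivable_pt_lim (fun y => f y ^ m) x (INR m * f x ^ Nat.pred m * a).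
Proof.
  intros H. pose proof (derivable_pt_lim_comp f (fun y => y ^ m) x a _ H (derivable_pt_lim_pow (f x) m)).
  unfold comp in H0. replace (INR m * f x ^ Nat.pred m * a) with (INR m * f x ^ Nat.pred m * a) by ring.
  exact H0.
Qed.
Lemma D_Rpow_comp f a c x : 0 < f x -> derivable_pt_lim f x a ->
  derivable_pt_lim (fun y => Rpower (f y) c) x (c * Rpower (f x) (c - 1) * a).
Proof.
  intros Hp H. pose proof (derivable_pt_lim_comp f (fun y => Rpower y c) x a _ H (derivable_pt_lim_power (f x) c Hp)).
  exact H0.
Qed.
Lemma D_Rpow c x : 0 < x ->
  derivable_pt_lim (fun y => Rpower y c) x (c * Rpower x (c - 1)).
Proof. intros. apply derivable_pt_lim_power; auto. Qed.
Lemma D_exp_comp f a x : derivable_pt_lim f x a ->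
  derivable_pt_lim (fun y => exp (f y)) x (exp (f x) * a).
Proof.
  intros H. exact (derivable_pt_lim_comp f exp x a _ H (derivable_pt_lim_exp (f x))).
Qed.
Lemma D_ext f g a x : (forall y, f y = g y) -> derivable_pt_lim f x a -> derivable_pt_lim g x a.
Proof. intros E H eps He. destruct (H eps He) as [d Hd]. exists d. intros h Hh Hh2. rewrite <- !E. apply Hd; auto. Qed.

Lemma D_val f a b x : derivable_pt_lim f x a -> a = b -> derivable_pt_lim f x b.
Proof. intros H ->. exact H. Qed.

Lemma growth (e ed : R -> R) R0 Eb c B sig :
  0 < R0 -> 0 < c -> 0 <= B -> 0 <= sig ->
  (forall r, R0 < r -> derivable_pt_lim e r (ed r)) ->
  (forall r, R0 < r -> e r <= Eb) ->
  (forall r, R0 < r -> c * e r - B * Rpower r (-sig) <= r * ed r) ->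
  forall r, R0 < r -> e r <= B / c * Rpower r (-sig).
Proof.
  intros HR Hc HB Hs Hd Hb Hi t Ht.
  set (h := fun s => (e s - B / c * Rpower s (-sig)) * Rpower s (-c)).
  set (hd := fun s => (ed s - B / c * (-sig * Rpower s (-sig - 1))) * Rpower s (-c)
            + (e s - B / c * Rpower s (-sig)) * (-c * Rpower s (-c - 1))).
  assert (Hhd : forall s, R0 < s -> derivable_pt_lim h s (hd s)).
  { intros s Hs0. unfold h, hd. eapply D_val. apply D_mult.
    - apply D_minus; [apply Hd; lra|].
      apply D_scal. apply D_Rpow. lra.
    - apply D_Rpow. lra.
    - reflexivity. }
  assert (Hpos : forall s, R0 < s -> 0 <= hd s).
  { intros s Hs0. unfold hd. rewrite !Rpower_m1 by lra.
    specialize (Hi s Hs0). pose proof (Rpower_pos s (-c)). pose proof (Rpower_pos s (-sig)).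
    assert (0 < s) by lra.
    assert (E : (ed s - B / c * (- sig * (Rpower s (- sig) / s))) * Rpower s (- c) +
      (e s - B / c * Rpower s (- sig)) * (- c * (Rpower s (- c) / s))
      = Rpower s (-c) / s * ((s * ed s - (c * e s - B * Rpower s (-sig))) + B / c * sig * Rpower s (-sig))).
    { field. split; lra. }
    rewrite E. apply Rmult_le_pos.
    - apply Rmult_le_pos; [lra|]. left; apply Rinv_0_lt_compat; lra.
    - assert (0 <= B / c * sig * Rpower s (-sig)).
      { apply Rmult_le_pos; [apply Rmult_le_pos|]; try lra. apply Rmult_le_pos; [lra|].
        left; apply Rinv_0_lt_compat; lra. }
      lra. }
  destruct (Rle_lt_dec (e t) (B / c * Rpower t (-sig))) as [|Hgt]; [auto|].
  exfalso.
  assert (Hht : 0 < h t).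
  { unfold h. apply Rmult_lt_0_compat; [lra|apply Rpower_pos]. }
  destruct (Rpower_large c ((Rabs Eb + 1) / h t) Hc) as [S [HS HSl]].
  set (s := Rmax S t + 1).
  assert (Hst : t <= s) by (unfold s; pose proof (Rmax_r S t); lra).
  assert (HSs : S < s) by (unfold s; pose proof (Rmax_l S t); lra).
  pose proof (nondecr h hd R0 Hhd Hpos t s Ht Hst) as Hmono.
  specialize (HSl s HSs).
  assert (e s >= h t * Rpower s c).
  { unfold h at 2 in Hmono.
    pose proof (Rpower_mul_inv s c).
    assert (Hbs : 0 <= B / c * Rpower s (-sig)).
    { apply Rmult_le_pos; [|left; apply Rpower_pos]. apply Rmult_le_pos; [lra|].
      left; apply Rinv_0_lt_compat; lra. }
    pose proof (Rpower_pos s c).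
    apply Rmult_le_compat_r with (r := Rpower s c) in Hmono; [|lra].
    replace ((e s - B / c * Rpower s (- sig)) * Rpower s (- c) * Rpower s c) with
      (e s - B / c * Rpower s (- sig)) in Hmono
      by (rewrite Rmult_assoc, H; ring). lra. }
  assert (h t * Rpower s c > Rabs Eb + 1).
  { apply Rmult_lt_compat_l with (r := h t) in HSl; [|lra].
    replace (h t * ((Rabs Eb + 1) / h t)) with (Rabs Eb + 1) in HSl by (field; lra). lra. }
  specialize (Hb s ltac:(lra)). pose proof (Rle_abs Eb). lra.
Qed.

Lemma D_cont f l t : derivable_pt_lim f t l ->
  forall eps, 0 < eps -> exists del, 0 < del /\ forall x, Rabs (x - t) < del -> Rabs (f x - f t) < eps.
Proof.
  intros H eps He. destruct (H 1 Rlt_0_1) as [d Hd].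
  set (del := Rmin d (eps / (Rabs l + 1))).
  assert (Hl : 0 < Rabs l + 1) by (pose proof (Rabs_pos l); lra).
  assert (0 < del) by (unfold del; apply Rmin_pos; [apply cond_pos| apply Rdiv_lt_0_compat; lra]).
  exists del. split; auto. intros x Hx.
  destruct (Req_dec x t) as [->|Hne]. { rewrite Rminus_diag, Rabs_R0. lra. }
  set (h := x - t). assert (h <> 0) by (unfold h; lra).
  assert (Rabs h < d) by (unfold h; pose proof (Rmin_l d (eps / (Rabs l + 1))); fold del in H2; lra).
  specialize (Hd h H1 H2). replace (t + h) with x in Hd by (unfold h; ring).
  assert (Habs : Rabs h < eps / (Rabs l + 1)) by (unfold h; pose proof (Rmin_r d (eps / (Rabs l + 1))); fold del in H3; lra).
  assert (Rabs ((f x - f t) / h) < Rabs l + 1).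
  { pose proof (Rabs_triang ((f x - f t) / h - l) l).
    replace ((f x - f t) / h - l + l) with ((f x - f t) / h) in H3 by ring. lra. }
  assert (Rabs (f x - f t) = Rabs ((f x - f t) / h) * Rabs h).
  { rewrite <- Rabs_mult. f_equal. field. auto. }
  rewrite H4.
  assert (0 < Rabs h) by (apply Rabs_pos_lt; auto).
  apply Rlt_le_trans with ((Rabs l + 1) * Rabs h).
  { apply Rmult_lt_compat_r; auto. }
  apply Rmult_lt_compat_l with (r := Rabs l + 1) in Habs; [|lra].
  replace ((Rabs l + 1) * (eps / (Rabs l + 1))) with eps in Habs by (field; lra). lra.
Qed.

Lemma barrier (f : R -> R) a c :
  (forall x, a <= x -> exists d, derivable_pt_lim f x d) ->
  f a <= c ->
  (forall x, a <= x -> f x = c -> exists d, derivable_pt_lim f x d /\ d < 0) ->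
  forall b, a <= b -> f b <= c.
Proof.
  intros Hd Ha Hc b Hab.
  destruct (Rle_lt_dec (f b) c) as [|Hfb]; [auto|]. exfalso.
  set (E := fun x => a <= x <= b /\ f x <= c).
  assert (HbE : bound E) by (exists b; intros x [Hx _]; lra).
  assert (HnE : exists x, E x) by (exists a; split; [lra|auto]).
  destruct (completeness E HbE HnE) as [t [Hub Hlub]].
  assert (Hat : a <= t) by (apply Hub; split; [lra|auto]).
  assert (Htb : t <= b) by (apply Hlub; intros x [Hx _]; lra).
  destruct (Hd t Hat) as [l Hl].
  destruct (Rtotal_order (f t) c) as [Hlt|[Heq|Hgt]].
  - destruct (D_cont f l t Hl (c - f t)) as [del [Hdel Hcont]]; [lra|].
    assert (Htb' : t < b) by (destruct (Req_dec t b); [subst; lra|lra]).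
    set (x := t + Rmin del (b - t) / 2).
    assert (0 < Rmin del (b - t)) by (apply Rmin_pos; lra).
    assert (Rmin del (b - t) <= del) by apply Rmin_l.
    assert (Rmin del (b - t) <= b - t) by apply Rmin_r.
    assert (E x).
    { split; [unfold x; lra|]. assert (Rabs (x - t) < del) by (unfold x; rewrite Rabs_right; lra).
      specialize (Hcont x H2). apply Rabs_def2 in Hcont. lra. }
    specialize (Hub x H2). unfold x in Hub. lra.
  - destruct (Hc t Hat Heq) as [d [Hd' Hneg]].
    assert (Hld : l = d) by (eapply uniqueness_limite; eauto). subst l.
    assert (Htb' : t < b) by (destruct (Req_dec t b); [subst; lra|lra]).
    destruct (Hd' (- d / 2)) as [del Hdel]; [lra|].
    set (h := Rmin del (b - t) / 2).
    assert (0 < Rmin del (b - t)) by (apply Rmin_pos; [apply cond_pos|lra]).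
    assert (Rmin del (b - t) <= del) by apply Rmin_l.
    assert (Rmin del (b - t) <= b - t) by apply Rmin_r.
    assert (Hh0 : h <> 0) by (unfold h; lra).
    assert (Hhd : Rabs h < del) by (unfold h; rewrite Rabs_right; lra).
    specialize (Hdel h Hh0 Hhd). apply Rabs_def2 in Hdel.
    assert (Hq : (f (t + h) - f t) / h < 0) by lra.
    assert (0 < h) by (unfold h; lra).
    assert (f (t + h) - f t < 0).
    { apply Rmult_lt_compat_r with (r := h) in Hq; auto.
      replace ((f (t + h) - f t) / h * h) with (f (t + h) - f t) in Hq by (field; lra). lra. }
    assert (E (t + h)) by (split; [unfold h in *; lra|lra]).
    specialize (Hub _ H4). lra.
  - destruct (D_cont f l t Hl (f t - c)) as [del [Hdel Hcont]]; [lra|].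
    assert (t <= t - del / 2).
    { apply Hlub. intros x [Hx Hfx].
      destruct (Rle_lt_dec x (t - del / 2)) as [|Hlt]; [auto|].
      assert (x <= t) by (apply Hub; split; auto).
      assert (Rabs (x - t) < del) by (rewrite Rabs_left1; lra).
      specialize (Hcont x H0). apply Rabs_def2 in Hcont. lra. }
    lra.
Qed.

Lemma nonincr2 (f f' : R -> R) a :
  (forall t, a <= t -> derivable_pt_lim f t (f' t)) ->
  (forall t, a <= t -> f' t <= 0) ->
  forall x y, a <= x -> x <= y -> f y <= f x.
Proof.
  intros Hd Hs x y Hx Hxy.
  destruct (Req_dec x y) as [->|Hne]; [lra|].
  destruct (MVT_cor2 f f' x y) as [c [Hc1 Hc2]]; [lra| |].
  - intros c Hc. apply Hd. lra.
  - assert (f' c <= 0) by (apply Hs; lra). nra.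
Qed.

Lemma nondecr2 (f f' : R -> R) a :
  (forall t, a <= t -> derivable_pt_lim f t (f' t)) ->
  (forall t, a <= t -> 0 <= f' t) ->
  forall x y, a <= x -> x <= y -> f x <= f y.
Proof.
  intros Hd Hs x y Hx Hxy.
  destruct (Req_dec x y) as [->|Hne]; [lra|].
  destruct (MVT_cor2 f f' x y) as [c [Hc1 Hc2]]; [lra| |].
  - intros c Hc. apply Hd. lra.
  - assert (0 <= f' c) by (apply Hs; lra). nra.
Qed.

Lemma D_uw (u : R -> R) u' c s : 0 < s -> derivable_pt_lim u s u' ->
  derivable_pt_lim (fun y => u y * Rpower y c) s (Rpower s c / s * (s * u' + c * u s)).
Proof.
  intros Hs H. eapply D_val. apply D_mult. exact H. apply D_Rpow. exact Hs.
  rewrite Rpower_m1 by exact Hs. field. lra.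
Qed.

Lemma core (u u' z Q Qd dl : R -> R) (j : nat) (K p bet a0 lam R1 : R) :
  K = INR (S j) ->
  0 < R1 -> 0 < a0 -> a0 < bet -> 0 < p - K -> 0 < lam ->
  (forall r, R1 < r -> 0 < u r /\ u' r < 0 /\ derivable_pt_lim u r (u' r)) ->
  (forall r, R1 < r -> z r = - r * u' r / u r) ->
  (forall r, R1 < r -> Q r = z r ^ S j /\ derivable_pt_lim Q r (Qd r) /\
                       r * Qd r = dl r - K * Q r * (bet - z r)) ->
  (forall r, R1 < r -> z r <= bet) ->
  (forall r, R1 < r -> dl r = lam * Rpower (u r * Rpower r a0) (p - K)) ->
  (forall eps, eps > 0 -> exists R0, forall r, r > R0 -> Rabs (u r * Rpower r a0) < eps) ->
  exists M R0, forall r, r > R0 -> u r <= M * Rpower r (- bet).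
Proof.
  intros HK HR1 Ha0 Hab HpK Hlam Hu Hz HQ Hzb Hdl Hdec.
  assert (HK0 : 0 < K) by (rewrite HK; apply lt_0_INR; lia).
  assert (Hzpos : forall r, R1 < r -> 0 < z r).
  { intros r Hr. rewrite Hz by exact Hr. destruct (Hu r Hr) as [H1 [H2 _]].
    apply Rdiv_lt_0_compat; nra. }
  assert (Hdl0 : forall eps, 0 < eps -> exists R, R1 <= R /\ forall r, R < r -> dl r < eps).
  { intros eps He.
    set (eta := Rpower (eps / lam) (/ (p - K))).
    assert (Heta : 0 < eta) by apply Rpower_pos.
    destruct (Hdec eta Heta) as [R0 HR0].
    exists (Rmax R1 R0). split; [apply Rmax_l|]. intros r Hr.
    assert (R1 < r) by (pose proof (Rmax_l R1 R0); lra).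
    assert (R0 < r) by (pose proof (Rmax_r R1 R0); lra).
    rewrite Hdl by auto. specialize (HR0 r H0).
    destruct (Hu r H) as [Hur _].
    assert (Hx : 0 < u r * Rpower r a0) by (apply Rmult_lt_0_compat; [auto|apply Rpower_pos]).
    rewrite Rabs_right in HR0 by lra.
    assert (Rpower (u r * Rpower r a0) (p - K) < Rpower eta (p - K)).
    { apply Rlt_Rpower_l; lra. }
    unfold eta in H1. rewrite Rpower_mult in H1.
    replace (/ (p - K) * (p - K)) with 1 in H1 by (field; lra).
    rewrite Rpower_1 in H1 by (apply Rdiv_lt_0_compat; lra).
    apply Rmult_lt_compat_l with (r := lam) in H1; auto.
    replace (lam * (eps / lam)) with eps in H1 by (field; lra). lra. }
  assert (Hyu : forall y, R1 < y -> y * u' y = - z y * u y).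
  { intros y Hy. rewrite Hz by exact Hy. destruct (Hu y Hy) as [H1 _]. field. lra. }
  set (z1 := a0 / 2).
  assert (Hz1 : 0 < z1) by (unfold z1; lra).
  set (c1 := K * z1 ^ S j * (bet - z1)).
  assert (Hc1 : 0 < c1).
  { unfold c1. apply Rmult_lt_0_compat; [apply Rmult_lt_0_compat; [lra|apply pow_lt; lra]|unfold z1; lra]. }
  destruct (Hdl0 c1 Hc1) as [R2 [HR2 HR2d]].
  assert (Hzz1 : forall r, R2 < r -> z1 < z r).
  { intros r Hr. apply Rnot_le_lt. intro Hle.
    assert (Hr1 : R1 < r) by lra.
    assert (Hbar : forall x, r <= x -> Q x <= z1 ^ S j).
    { apply barrier.
      - intros x Hx. destruct (HQ x ltac:(lra)) as [_ [Hd _]]. eexists; exact Hd.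
      - destruct (HQ r Hr1) as [-> _]. apply pow_incr. pose proof (Hzpos r Hr1). lra.
      - intros x Hx HQx. destruct (HQ x ltac:(lra)) as [HQe [Hd Hid]]. exists (Qd x). split; auto.
        assert (Hzx : z x = z1).
        { pose proof (Hzpos x ltac:(lra)). rewrite HQe in HQx.
          apply Rle_antisym; apply (pow_lt_inv _ _ (S j)); try lra; try lia; rewrite HQx; lra. }
        rewrite HQx, Hzx in Hid. specialize (HR2d x ltac:(lra)).
        fold c1 in Hid. assert (x * Qd x < 0) by lra.
        assert (0 < x) by lra. nra. }
    assert (Hzle : forall x, r <= x -> z x <= z1).
    { intros x Hx. specialize (Hbar x Hx). destruct (HQ x ltac:(lra)) as [HQe _].
      rewrite HQe in Hbar. apply (pow_lt_inv _ _ (S j)); try lia; try lra.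
      pose proof (Hzpos x ltac:(lra)); lra. }
    set (f := fun y => u y * Rpower y z1).
    set (f' := fun y => Rpower y z1 / y * (y * u' y + z1 * u y)).
    assert (Hfm : forall x, r <= x -> f r <= f x).
    { intros x Hx. apply (nondecr2 f f' r); try lra.
      - intros t Ht. unfold f, f'. apply D_uw; [lra|]. apply Hu; lra.
      - intros t Ht. unfold f'. rewrite Hyu by lra.
        pose proof (Hzle t Ht). destruct (Hu t ltac:(lra)) as [Hut _].
        apply Rmult_le_pos. apply Rmult_le_pos; [left; apply Rpower_pos|left; apply Rinv_0_lt_compat; lra].
        nra. }
    set (m := f r).
    assert (Hm : 0 < m) by (unfold m, f; apply Rmult_lt_0_compat; [apply Hu; lra|apply Rpower_pos]).
    destruct (Hdec 1 Rlt_0_1) as [R0 HR0].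
    destruct (Rpower_large z1 (/ m) Hz1) as [S [HS HSl]].
    set (s := Rmax (Rmax R0 S) r + 1).
    assert (HsR0 : R0 < s) by (unfold s; pose proof (Rmax_l (Rmax R0 S) r); pose proof (Rmax_l R0 S); lra).
    assert (HsS : S < s) by (unfold s; pose proof (Rmax_l (Rmax R0 S) r); pose proof (Rmax_r R0 S); lra).
    assert (Hsr : r <= s) by (unfold s; pose proof (Rmax_r (Rmax R0 S) r); lra).
    specialize (HR0 s HsR0). specialize (HSl s HsS). specialize (Hfm s Hsr).
    assert (E : u s * Rpower s a0 = f s * Rpower s z1).
    { unfold f. replace a0 with (z1 + z1) by (unfold z1; field). rewrite Rpower_plus. ring. }
    rewrite E in HR0. fold m in Hfm.
    assert (m * / m = 1) by (field; lra).
    assert (m * / m < f s * Rpower s z1).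
    { apply Rlt_le_trans with (m * Rpower s z1).
      - apply Rmult_lt_compat_l; lra.
      - apply Rmult_le_compat_r; [left; apply Rpower_pos|lra]. }
    pose proof (Rle_abs (f s * Rpower s z1)). lra. }
  assert (Hbet : 0 < bet) by lra.
  set (e := fun r => bet ^ S j - Q r).
  set (ed := fun r => - Qd r).
  set (c2 := z1 ^ S j / bet ^ j).
  assert (Hc2 : 0 < c2) by (unfold c2; apply Rdiv_lt_0_compat; apply pow_lt; lra).
  assert (Hed : forall r, R1 < r -> derivable_pt_lim e r (ed r)).
  { intros r Hr. unfold e, ed. eapply D_val. apply D_minus. apply D_const.
    apply (HQ r Hr). ring. }
  assert (Heb : forall r, R1 < r -> e r <= bet ^ S j).
  { intros r Hr. unfold e. destruct (HQ r Hr) as [-> _].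
    assert (0 <= z r ^ S j) by (apply pow_le; pose proof (Hzpos r Hr); lra). lra. }
  assert (Hineq : forall r, R2 < r -> c2 * e r - dl r <= r * ed r).
  { intros r Hr. assert (Hr1 : R1 < r) by lra.
    destruct (HQ r Hr1) as [HQe [_ Hid]]. unfold e, ed.
    replace (r * - Qd r) with (- (r * Qd r)) by ring. rewrite Hid, HQe.
    pose proof (Hzz1 r Hr). pose proof (Hzb r Hr1).
    pose proof (binom_up bet (z r) j ltac:(lra) H0). rewrite <- HK in H1.
    assert (c2 * (bet ^ S j - z r ^ S j) <= c2 * (K * bet ^ j * (bet - z r))).
    { apply Rmult_le_compat_l; lra. }
    assert (c2 * (K * bet ^ j * (bet - z r)) = K * z1 ^ S j * (bet - z r)).
    { unfold c2. field. apply pow_nonzero. lra. }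
    assert (z1 ^ S j <= z r ^ S j) by (apply pow_incr; lra).
    assert (K * z1 ^ S j * (bet - z r) <= K * z r ^ S j * (bet - z r)).
    { apply Rmult_le_compat_r; [lra|]. apply Rmult_le_compat_l; lra. }
    lra. }
  set (z2 := (a0 + bet) / 2).
  assert (Hz2 : z1 < z2 < bet) by (unfold z1, z2; lra).
  set (gap := bet ^ S j - z2 ^ S j).
  assert (Hgap : 0 < gap).
  { unfold gap. apply Rlt_0_minus. apply Rnot_le_lt. intro Hc.
    assert (bet <= z2) by (apply (pow_lt_inv _ _ (S j)); try lia; lra). lra. }
  destruct (Hdl0 (c2 * gap / 2)) as [R4 [HR4 HR4d]].
  { apply Rdiv_lt_0_compat; [apply Rmult_lt_0_compat|]; lra. }
  set (R5 := Rmax R2 R4).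
  assert (HR5a : R2 <= R5) by apply Rmax_l.
  assert (HR5b : R4 <= R5) by apply Rmax_r.
  assert (Hzz2 : forall r, R5 < r -> z2 < z r).
  { intros r Hr.
    assert (He : e r <= c2 * gap / 2 / c2 * Rpower r (- 0)).
    { apply (growth e ed R5 (bet ^ S j) c2 (c2 * gap / 2) 0); try lra.
      - apply Rmult_le_pos; [apply Rmult_le_pos|]; lra.
      - intros t Ht. apply Hed. lra.
      - intros t Ht. apply Heb. lra.
      - intros t Ht. rewrite Ropp_0, Rpower_O by lra.
        pose proof (Hineq t ltac:(lra)). pose proof (HR4d t ltac:(lra)). lra. }
    rewrite Ropp_0, Rpower_O in He by lra.
    replace (c2 * gap / 2 / c2 * 1) with (gap / 2) in He by (field; lra).
    unfold e, gap in He. destruct (HQ r ltac:(lra)) as [HQe _]. rewrite HQe in He.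
    apply Rnot_le_lt. intro Hc.
    assert (z r ^ S j <= z2 ^ S j) by (apply pow_incr; pose proof (Hzpos r ltac:(lra)); lra).
    unfold gap in Hgap. lra. }
  set (r5 := R5 + 1).
  set (A := u r5 * Rpower r5 z2).
  assert (HA : 0 < A) by (unfold A; apply Rmult_lt_0_compat; [apply Hu; unfold r5; lra|apply Rpower_pos]).
  assert (Hubd : forall s, r5 <= s -> u s <= A * Rpower s (- z2)).
  { intros s Hs.
    assert (u s * Rpower s z2 <= A).
    { unfold A. apply (nonincr2 (fun y => u y * Rpower y z2)
        (fun y => Rpower y z2 / y * (y * u' y + z2 * u y)) r5); try lra.
      - intros t Ht. apply D_uw; [unfold r5 in *; lra|]. apply Hu. unfold r5 in *; lra.
      - intros t Ht. assert (R1 < t) by (unfold r5 in *; lra). rewrite Hyu by lra.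
        pose proof (Hzz2 t ltac:(unfold r5 in *; lra)). destruct (Hu t H) as [Hut _].
        assert (0 < Rpower t z2 / t) by (apply Rdiv_lt_0_compat; [apply Rpower_pos|lra]).
        assert (- z t * u t + z2 * u t <= 0) by nra. nra. }
    pose proof (Rpower_mul_inv s z2). pose proof (Rpower_pos s (-z2)).
    apply Rmult_le_compat_r with (r := Rpower s (- z2)) in H; [|lra].
    replace (u s * Rpower s z2 * Rpower s (- z2)) with (u s) in H
      by (rewrite Rmult_assoc, (Rmult_comm (Rpower s z2)), H0; ring). lra. }
  set (sig := (z2 - a0) * (p - K)).
  assert (Hsig : 0 < sig) by (unfold sig; apply Rmult_lt_0_compat; unfold z2; lra).
  set (B := lam * Rpower A (p - K)).
  assert (HB : 0 < B) by (unfold B; apply Rmult_lt_0_compat; [lra|apply Rpower_pos]).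
  assert (Hdlb : forall s, r5 < s -> dl s <= B * Rpower s (- sig)).
  { intros s Hs. assert (Hs1 : R1 < s) by (unfold r5 in *; lra).
    rewrite Hdl by exact Hs1. unfold B. rewrite Rmult_assoc. apply Rmult_le_compat_l; [lra|].
    assert (Rpower (u s * Rpower s a0) (p - K) <= Rpower (A * Rpower s (- z2) * Rpower s a0) (p - K)).
    { apply Rle_Rpower_l; [lra|]. split.
      - apply Rmult_lt_0_compat; [apply Hu; auto|apply Rpower_pos].
      - apply Rmult_le_compat_r; [left; apply Rpower_pos|]. apply Hubd. lra. }
    replace (A * Rpower s (- z2) * Rpower s a0) with (A * Rpower s (a0 - z2)) in H.
    2: { unfold Rminus. rewrite (Rplus_comm a0), Rpower_plus. ring. }
    rewrite <- (Rpower_mult_distr A (Rpower s (a0 - z2))) in H by (auto; apply Rpower_pos).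
    rewrite (Rpower_mult s) in H. replace ((a0 - z2) * (p - K)) with (- sig) in H by (unfold sig; ring).
    exact H. }
  assert (He2 : forall r, r5 < r -> e r <= B / c2 * Rpower r (- sig)).
  { apply (growth e ed r5 (bet ^ S j) c2 B sig); try lra.
    - unfold r5. lra.
    - intros t Ht. apply Hed. unfold r5 in *; lra.
    - intros t Ht. apply Heb. unfold r5 in *; lra.
    - intros t Ht. pose proof (Hineq t ltac:(unfold r5 in *; lra)). pose proof (Hdlb t Ht). lra. }
  set (E' := B / (c2 * K * z1 ^ j)).
  assert (HE' : 0 < E').
  { unfold E'. apply Rdiv_lt_0_compat; [lra|]. apply Rmult_lt_0_compat; [nra|apply pow_lt; lra]. }
  assert (Hbz : forall r, r5 < r -> bet - z r <= E' * Rpower r (- sig)).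
  { intros r Hr. assert (Hr1 : R1 < r) by (unfold r5 in *; lra).
    pose proof (Hzz1 r ltac:(unfold r5 in *; lra)). pose proof (Hzb r Hr1).
    pose proof (binom_lo bet (z r) j ltac:(lra) H0). rewrite <- HK in H1.
    pose proof (He2 r Hr). unfold e in H2. destruct (HQ r Hr1) as [HQe _]. rewrite HQe in H2.
    assert (z1 ^ j <= z r ^ j) by (apply pow_incr; lra).
    assert (Hp1 : 0 < z1 ^ j) by (apply pow_lt; lra).
    assert (K * z1 ^ j * (bet - z r) <= K * z r ^ j * (bet - z r)).
    { apply Rmult_le_compat_r; [lra|]. apply Rmult_le_compat_l; lra. }
    assert (Hk : K * z1 ^ j * (bet - z r) <= B / c2 * Rpower r (- sig)) by lra.
    unfold E'. apply Rmult_le_reg_l with (r := K * z1 ^ j); [nra|].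
    replace (K * z1 ^ j * (B / (c2 * K * z1 ^ j) * Rpower r (- sig))) with (B / c2 * Rpower r (- sig))
      by (field; repeat split; lra).
    exact Hk. }
  set (r6 := r5 + 1).
  set (phi := fun y => u y * Rpower y bet * exp (E' / sig * Rpower y (- sig))).
  set (phi' := fun y => Rpower y bet / y * (y * u' y + bet * u y) * exp (E' / sig * Rpower y (- sig))
     + u y * Rpower y bet * (exp (E' / sig * Rpower y (- sig)) * (E' / sig * (- sig * Rpower y (- sig - 1))))).
  assert (Hphi : forall s, r6 <= s -> phi s <= phi r6).
  { intros s Hs. apply (nonincr2 phi phi' r6); try lra.
    - intros t Ht. assert (Ht1 : R1 < t) by (unfold r6, r5 in *; lra).
      unfold phi, phi'. eapply D_val. apply (D_mult (fun y => u y * Rpower y bet) (fun y => exp (E' / sig * Rpower y (- sig)))).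
      + apply D_uw; [lra|]. apply Hu; auto.
      + apply D_exp_comp. apply D_scal. apply D_Rpow. lra.
      + reflexivity.
    - intros t Ht. assert (Ht1 : R1 < t) by (unfold r6, r5 in *; lra).
      unfold phi'. rewrite Hyu by exact Ht1. rewrite Rpower_m1 by lra.
      destruct (Hu t Ht1) as [Hut _].
      set (X := exp (E' / sig * Rpower t (- sig))).
      assert (HX : 0 < X) by apply exp_pos.
      pose proof (Rpower_pos t bet).
      assert (Eq : Rpower t bet / t * (- z t * u t + bet * u t) * X +
        u t * Rpower t bet * (X * (E' / sig * (- sig * (Rpower t (- sig) / t))))
        = X * Rpower t bet / t * u t * ((bet - z t) - E' * Rpower t (- sig))).
      { field. split; lra. }
      rewrite Eq. pose proof (Hbz t ltac:(unfold r6 in *; lra)).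
      assert (0 < X * Rpower t bet / t * u t).
      { apply Rmult_lt_0_compat; auto. apply Rdiv_lt_0_compat; [nra|lra]. }
      nra. }
  exists (phi r6), r6. intros s Hs.
  specialize (Hphi s ltac:(lra)).
  assert (Hs1 : R1 < s) by (unfold r6, r5 in *; lra).
  assert (1 <= exp (E' / sig * Rpower s (- sig))).
  { rewrite <- exp_0. assert (0 <= E' / sig * Rpower s (- sig)).
    { apply Rmult_le_pos; [apply Rlt_le, Rdiv_lt_0_compat; lra|left; apply Rpower_pos]. }
    destruct H; [left; apply exp_increasing; auto|right; rewrite H; auto]. }
  assert (u s * Rpower s bet <= phi r6).
  { unfold phi at 1 in Hphi. assert (0 < u s * Rpower s bet) by (apply Rmult_lt_0_compat; [apply Hu; auto|apply Rpower_pos]).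
    nra. }
  pose proof (Rpower_mul_inv s bet). pose proof (Rpower_pos s (-bet)).
  apply Rmult_le_compat_r with (r := Rpower s (- bet)) in H0; [|lra].
  replace (u s * Rpower s bet * Rpower s (- bet)) with (u s) in H0
    by (rewrite Rmult_assoc, (Rmult_comm (Rpower s bet)), H1; ring). lra.
Qed.

Lemma Rpower_pow_gen x c m : Rpower x c ^ m = Rpower x (c * INR m).
Proof.
  rewrite <- Rpower_pow by apply Rpower_pos. rewrite Rpower_mult. reflexivity.
Qed.

Lemma zle (u u' W : R -> R) (m j : nat) (bet R1 : R) :
  0 < R1 -> 0 < bet -> INR m = (bet + 1) * INR (S j) ->
  (forall r, R1 < r -> 0 < u r /\ u' r < 0 /\ derivable_pt_lim u r (u' r)) ->
  (forall r, R1 < r -> W r = r ^ m * (- u' r) ^ S j) ->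
  (forall r s, R1 < r -> r <= s -> W r <= W s) ->
  (forall eps, 0 < eps -> exists R, forall r, R < r -> u r < eps) ->
  forall r, R1 < r -> - r * u' r / u r <= bet.
Proof.
  intros HR1 Hb Hm Hu HW Hmono Hlim r0 Hr0.
  destruct (Hu r0 Hr0) as [Hu0 [Hu'0 _]].
  set (Y := - u' r0).
  assert (HY : 0 < Y) by (unfold Y; lra).
  set (b := fun s => Y * Rpower r0 (bet + 1) * Rpower s (- bet - 1)).
  assert (Hbs : forall s, r0 <= s -> b s <= - u' s).
  { intros s Hs. assert (Hs1 : R1 < s) by lra.
    destruct (Hu s Hs1) as [_ [Hus _]].
    apply (pow_lt_inv _ _ (S j)); try lia.
    - unfold b. left. apply Rmult_lt_0_compat; [apply Rmult_lt_0_compat; [lra|apply Rpower_pos]|apply Rpower_pos].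
    - lra.
    - unfold b. rewrite !Rpow_mult_distr, !Rpower_pow_gen.
      rewrite <- Hm. replace ((- bet - 1) * INR (S j)) with (- INR m) by lra.
      rewrite Rpower_Ropp, !Rpower_pow by lra.
      assert (W r0 <= W s) by (apply Hmono; lra).
      rewrite !HW in H by lra. fold Y in H.
      assert (0 < s ^ m) by (apply pow_lt; lra).
      apply Rmult_le_reg_r with (r := s ^ m); auto.
      replace (Y ^ S j * r0 ^ m * / s ^ m * s ^ m) with (r0 ^ m * Y ^ S j) by (field; lra).
      lra. }
  set (D := Y * Rpower r0 (bet + 1) / bet).
  assert (HD : 0 < D) by (unfold D; apply Rdiv_lt_0_compat; [apply Rmult_lt_0_compat; [lra|apply Rpower_pos]|lra]).
  set (psi := fun s => u s - D * Rpower s (- bet)).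
  set (psi' := fun s => u' s - D * (- bet * Rpower s (- bet - 1))).
  assert (Hpsi : forall s, r0 <= s -> psi s <= psi r0).
  { intros s Hs. apply (nonincr2 psi psi' r0); try lra.
    - intros t Ht. unfold psi, psi'. apply D_minus; [apply Hu; lra|].
      apply D_scal. apply D_Rpow. lra.
    - intros t Ht. unfold psi'. pose proof (Hbs t Ht). unfold b in H.
      replace (u' t - D * (- bet * Rpower t (- bet - 1))) with
        (u' t + Y * Rpower r0 (bet + 1) * Rpower t (- bet - 1)) by (unfold D; field; lra).
      lra. }
  assert (Hpsi0 : 0 <= psi r0).
  { apply Rnot_lt_le. intro Hneg.
    destruct (Rpower_small bet (- psi r0 / D) Hb) as [S [HS HSl]].
    { apply Rdiv_lt_0_compat; lra. }
    set (s := Rmax S r0 + 1).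
    assert (Hs1 : S < s) by (unfold s; pose proof (Rmax_l S r0); lra).
    assert (Hs2 : r0 <= s) by (unfold s; pose proof (Rmax_r S r0); lra).
    specialize (HSl s Hs1). specialize (Hpsi s Hs2).
    unfold psi at 1 in Hpsi.
    assert (0 < u s) by (apply Hu; lra).
    apply Rmult_lt_compat_l with (r := D) in HSl; auto.
    replace (D * (- psi r0 / D)) with (- psi r0) in HSl by (field; lra). lra. }
  unfold psi in Hpsi0.
  assert (E : D * Rpower r0 (- bet) = Y * r0 / bet).
  { unfold D. replace (Y * Rpower r0 (bet + 1) / bet * Rpower r0 (- bet))
      with (Y * (Rpower r0 (bet + 1) * Rpower r0 (- bet)) / bet) by (field; lra).
    rewrite <- Rpower_plus. replace (bet + 1 + - bet) with 1 by ring.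
    rewrite Rpower_1 by lra. ring. }
  rewrite E in Hpsi0.
  replace (- r0 * u' r0 / u r0) with (r0 * Y / u r0) by (unfold Y; field; lra).
  apply Rmult_le_reg_r with (r := u r0); auto.
  replace (r0 * Y / u r0 * u r0) with (r0 * Y) by (field; lra).
  apply Rmult_le_reg_r with (r := / bet). apply Rinv_0_lt_compat; lra.
  replace (bet * u r0 * / bet) with (u r0) by (field; lra).
  replace (r0 * Y * / bet) with (Y * r0 / bet) by (field; lra). lra.
Qed.

Lemma Q_eq r uu u0 (n j : nat) : (S j <= n)%nat -> 0 < r -> 0 < uu -> u0 < 0 ->
  - (r ^ (n - S j) * Rabs u0 ^ j * u0) * Rpower r (2 * INR (S j) - INR n) / uu ^ S j
  = (- r * u0 / uu) ^ S j.
Proof.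
  intros Hn Hr Hu Hu0. rewrite Rabs_left by exact Hu0.
  rewrite <- Rpower_pow by exact Hr. rewrite minus_INR by exact Hn.
  replace (- (Rpower r (INR n - INR (S j)) * (- u0) ^ j * u0) * Rpower r (2 * INR (S j) - INR n))
    with ((Rpower r (INR n - INR (S j)) * Rpower r (2 * INR (S j) - INR n)) * ((- u0) ^ j * - u0)) by ring.
  rewrite <- Rpower_plus. replace (INR n - INR (S j) + (2 * INR (S j) - INR n)) with (INR (S j)) by ring.
  rewrite Rpower_pow by exact Hr.
  replace ((- u0) ^ j * - u0) with ((- u0) ^ S j) by (simpl; ring).
  replace (- r * u0 / uu) with (r * (- u0) * / uu) by (field; lra).
  rewrite !Rpow_mult_distr, pow_inv. field. apply pow_nonzero. lra.
Qed.

Lemma Qd_id r uu u0 w0 wd0 (j : nat) K N : 0 < r -> 0 < uu -> K = INR (S j) ->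
  let P := Rpower r (2 * K - N) in
  r * (((- wd0 * P + - w0 * ((2 * K - N) * Rpower r (2 * K - N - 1))) * uu ^ S j
         - (- w0 * P) * (INR (S j) * uu ^ j * u0)) / (uu ^ S j) ^ 2)
  = r * (- wd0) * P / uu ^ S j - K * (- w0 * P / uu ^ S j) * ((N - 2 * K) / K - (- r * u0 / uu)).
Proof.
  intros Hr Hu HK P. rewrite Rpower_m1 by exact Hr. fold P. rewrite <- HK.
  assert (HK0 : 0 < K) by (rewrite HK; apply lt_0_INR; lia).
  assert (uu ^ j <> 0) by (apply pow_nonzero; lra).
  simpl. field. repeat split; lra.
Qed.

Lemma dl_id r uu (n j : nat) K N p C0 : (1 <= n)%nat -> 0 < r -> 0 < uu -> K = INR (S j) -> N = INR n ->
  0 < p - K -> 0 < C0 ->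
  r * (K / C0 * r ^ (n - 1) * Rpower uu p) * Rpower r (2 * K - N) / uu ^ S j
  = K / C0 * Rpower (uu * Rpower r (2 * K / (p - K))) (p - K).
Proof.
  intros Hn Hr Hu HK HN HpK HC.
  assert (E1 : r * r ^ (n - 1) = Rpower r N).
  { rewrite HN, Rpower_pow by exact Hr. destruct n; [lia|]. simpl. rewrite Nat.sub_0_r. reflexivity. }
  assert (E2 : uu ^ S j = Rpower uu K) by (rewrite HK, Rpower_pow; auto).
  rewrite <- Rpower_mult_distr by (auto; apply Rpower_pos).
  rewrite Rpower_mult. replace (2 * K / (p - K) * (p - K)) with (2 * K) by (field; lra).
  assert (E3 : Rpower uu p = Rpower uu (p - K) * Rpower uu K).
  { rewrite <- Rpower_plus. f_equal. ring. }
  assert (E4 : Rpower r (2 * K) = Rpower r N * Rpower r (2 * K - N)).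
  { rewrite <- Rpower_plus. f_equal. ring. }
  rewrite E2, E3, E4. rewrite <- E1.
  pose proof (Rpower_pos uu K).
  field. lra.
Qed.

Theorem lemma2p3 (n k : nat) (p rho : R) (u : R -> R) :
  (3 <= n)%nat ->
  (1 < k)%nat ->
  INR k < INR n / 2 ->
  p > INR n * INR k / (INR n - 2 * INR k) ->
  rho > 0 ->
  solves_1_6 n k p rho u ->
  regular n u ->
  (forall eps, eps > 0 -> exists R0, forall r, r > R0 ->
     Rabs (u r * Rpower r (2 * INR k / (p - INR k))) < eps) ->
  exists M R0, forall r, r > R0 ->
     Rabs (u r) <= M * Rpower r ((2 * INR k - INR n) / INR k).
Proof.
  intros Hn Hk HkN Hp _ Hsol _ Hdec.
  destruct k as [|j]; [lia|].
  set (K := INR (S j)) in *. set (N := INR n) in *.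
  assert (HK0 : 0 < K) by (unfold K; apply lt_0_INR; lia).
  assert (HN2K : 0 < N - 2 * K) by lra.
  assert (H2k : (2 * S j < n)%nat).
  { apply INR_lt. rewrite mult_INR. fold K N. simpl (INR 2). lra. }
  assert (HpN : N * K < p * (N - 2 * K)).
  { apply Rmult_lt_compat_r with (r := N - 2 * K) in Hp; auto.
    replace (N * K / (N - 2 * K) * (N - 2 * K)) with (N * K) in Hp by (field; lra). lra. }
  assert (HpK : 0 < p - K) by nra.
  set (bet := (N - 2 * K) / K).
  set (a0 := 2 * K / (p - K)).
  assert (Hbet : 0 < bet) by (unfold bet; apply Rdiv_lt_0_compat; lra).
  assert (Ha0 : 0 < a0) by (unfold a0; apply Rdiv_lt_0_compat; lra).
  assert (Hab : a0 < bet).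
  { unfold a0, bet. apply Rmult_lt_reg_r with (r := K * (p - K)); [nra|].
    replace (2 * K / (p - K) * (K * (p - K))) with (2 * K * K) by (field; lra).
    replace ((N - 2 * K) / K * (K * (p - K))) with ((N - 2 * K) * (p - K)) by (field; lra).
    nra. }
  destruct Hsol as [[u' [Hud Hw]] [Hpos _]].
  replace (S j - 1)%nat with j in Hw by lia.
  set (w := fun s => s ^ (n - S j) * Rabs (u' s) ^ j * u' s) in *.
  set (C0 := C (n - 1) j) in *.
  assert (HC0 : 0 < C0).
  { unfold C0, C. apply Rdiv_lt_0_compat; [apply INR_fact_lt_0|].
    apply Rmult_lt_0_compat; apply INR_fact_lt_0. }
  destruct (fun_choice_R (fun x y => 0 < x -> derivable_pt_lim w x y /\
       - (1 / K) * C0 * y = x ^ (n - 1) * Rpower (u x) p)) as [wd Hwd].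
  { intro x. destruct (Rlt_dec 0 x) as [Hx|Hx].
    - destruct (Hw x Hx) as [d Hd]. exists d. intros _. exact Hd.
    - exists 0. intro. lra. }
  assert (Hwd' : forall r, 0 < r -> derivable_pt_lim w r (wd r) /\
                  wd r = - (K / C0 * r ^ (n - 1) * Rpower (u r) p)).
  { intros r Hr. destruct (Hwd r Hr) as [H1 H2]. split; auto.
    apply Rmult_eq_reg_l with (r := - (1 / K) * C0).
    - rewrite H2. field. lra.
    - apply Rmult_integral_contrapositive. split; [|lra].
      apply Ropp_neq_0_compat. apply Rgt_not_eq. unfold Rdiv. rewrite Rmult_1_l.
      apply Rinv_0_lt_compat. lra. }
  assert (Hwneg : forall r, 0 < r -> wd r < 0).
  { intros r Hr. destruct (Hwd' r Hr) as [_ ->].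
    assert (0 < K / C0 * r ^ (n - 1) * Rpower (u r) p).
    { apply Rmult_lt_0_compat; [apply Rmult_lt_0_compat; [apply Rdiv_lt_0_compat; lra|apply pow_lt; lra]|apply Rpower_pos]. }
    lra. }
  assert (Hwmono : forall x y, 0 < x -> x <= y -> w y <= w x).
  { apply (nonincr w wd 0).
    - intros x Hx. apply Hwd'. lra.
    - intros x Hx. left. apply Hwneg. lra. }
  assert (Hu0 : forall eps, 0 < eps -> exists R, forall r, R < r -> u r < eps).
  { intros eps He. destruct (Hdec 1 ltac:(lra)) as [R0 HR0].
    destruct (Rpower_large a0 (/ eps) Ha0) as [S [HS HSl]].
    exists (Rmax R0 S). intros r Hr.
    assert (R0 < r) by (pose proof (Rmax_l R0 S); lra).
    assert (S < r) by (pose proof (Rmax_r R0 S); lra).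
    specialize (HR0 r H). specialize (HSl r H0). fold a0 in HR0.
    assert (Hur : 0 < u r) by (apply Hpos; lra).
    rewrite Rabs_right in HR0 by (left; apply Rmult_lt_0_compat; [auto|apply Rpower_pos]).
    assert (u r * / eps < u r * Rpower r a0) by (apply Rmult_lt_compat_l; auto).
    apply Rmult_lt_reg_r with (r := / eps). apply Rinv_0_lt_compat; auto.
    rewrite Rinv_r by lra. lra. }
  assert (HR1 : exists R1, 0 < R1 /\ forall r, R1 < r -> w r < 0).
  { destruct (classic (exists r1, 0 < r1 /\ w r1 < 0)) as [[r1 [Hr1 Hwr1]]|Hno].
    - exists r1. split; auto. intros r Hr. pose proof (Hwmono r1 r Hr1 ltac:(lra)). lra.
    - exfalso.
      assert (Hup : forall r, 0 < r -> 0 <= u' r).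
      { intros r Hr. apply Rnot_lt_le. intro Hneg. apply Hno. exists r. split; auto.
        unfold w. assert (0 < r ^ (n - S j) * Rabs (u' r) ^ j).
        { apply Rmult_lt_0_compat; apply pow_lt; [lra|]. apply Rabs_pos_lt. lra. }
        nra. }
      assert (Hm : forall r, 1 <= r -> u 1 <= u r).
      { intros r Hr. apply (nondecr u u' 0); try lra.
        - intros x Hx. apply Hud. lra.
        - intros x Hx. apply Hup. lra. }
      destruct (Hu0 (u 1) ltac:(apply Hpos; lra)) as [R HR].
      specialize (HR (Rmax R 1 + 1) ltac:(pose proof (Rmax_l R 1); lra)).
      specialize (Hm (Rmax R 1 + 1) ltac:(pose proof (Rmax_r R 1); lra)). lra. }
  destruct HR1 as [R1 [HR1 HwR1]].
  assert (Hu'neg : forall r, R1 < r -> u' r < 0).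
  { intros r Hr. apply Rnot_le_lt. intro Hnn. specialize (HwR1 r Hr). unfold w in HwR1.
    assert (0 <= r ^ (n - S j) * Rabs (u' r) ^ j).
    { apply Rmult_le_pos; apply pow_le; [lra|apply Rabs_pos]. }
    nra. }
  assert (Hu : forall r, R1 < r -> 0 < u r /\ u' r < 0 /\ derivable_pt_lim u r (u' r)).
  { intros r Hr. split; [apply Hpos; lra|]. split; [auto|apply Hud; lra]. }
  set (z := fun r => - r * u' r / u r).
  set (Q := fun r => - w r * Rpower r (2 * K - N) / u r ^ S j).
  set (Qd := fun r => ((- wd r * Rpower r (2 * K - N) + - w r * ((2 * K - N) * Rpower r (2 * K - N - 1))) * u r ^ S j
         - (- w r * Rpower r (2 * K - N)) * (INR (S j) * u r ^ j * u' r)) / (u r ^ S j) ^ 2).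
  set (dl := fun r => r * (- wd r) * Rpower r (2 * K - N) / u r ^ S j).
  assert (Hcore : exists M R0, forall r, r > R0 -> u r <= M * Rpower r (- bet)).
  { apply (core u u' z Q Qd dl j K p bet a0 (K / C0) R1); auto.
    - apply Rdiv_lt_0_compat; lra.
    - intros r Hr. destruct (Hu r Hr) as [Hur [Hu'r Hd]]. split; [|split].
      + unfold Q, z, w. apply Q_eq; auto; lia || lra.
      + unfold Q, Qd. apply (D_div (fun y => - w y * Rpower y (2 * K - N)) (fun y => u y ^ S j)).
        * eapply D_val. apply (D_mult (fun y => - w y) (fun y => Rpower y (2 * K - N))).
          -- apply D_opp. apply Hwd'. lra.
          -- apply D_Rpow. lra.
          -- reflexivity.
        * apply D_pow. exact Hd.
        * apply pow_nonzero. lra.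
      + pose proof (Qd_id r (u r) (u' r) (w r) (wd r) j K N ltac:(lra) Hur eq_refl) as E.
        cbv zeta in E. exact E.
    - intros r Hr. apply (zle u u' (fun s => - w s) (n - S j) j bet R1); auto.
      + rewrite minus_INR by lia. fold K N. unfold bet. field. lra.
      + intros s Hs. unfold w. destruct (Hu s Hs) as [_ [Hs' _]]. rewrite Rabs_left by lra.
        simpl. ring.
      + intros x y Hx Hxy. pose proof (Hwmono x y ltac:(lra) Hxy). lra.
    - intros r Hr. destruct (Hu r Hr) as [Hur _]. unfold dl.
      destruct (Hwd' r ltac:(lra)) as [_ ->]. rewrite Ropp_involutive.
      apply dl_id; auto; lia || lra. }
  destruct Hcore as [M [R0 HM]].
  exists M, (Rmax R0 R1). intros r Hr.
  assert (R0 < r) by (pose proof (Rmax_l R0 R1); lra).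
  assert (R1 < r) by (pose proof (Rmax_r R0 R1); lra).
  rewrite Rabs_right by (left; apply Hpos; lra).
  replace ((2 * K - N) / K) with (- bet) by (unfold bet; field; lra).
  apply HM. lra.
Qed.
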